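(* In $\mathbf{Bigpd}$, the cofibrations and the trivial fibrations (morphisms that are both fibrations and weak equivalences) form a weak factorization system.
   Context: A bigroupoid $\mathcal B$ consists of: a set $\mathcal B_0$ of 0-cells; for each $A,B\in\mathcal B_0$ a groupoid $\mathcal B(A,B)$ whose objects are 1-cells $f:A\to B$ and whose arrows are 2-cells; composition functors $*:\mathcal B(B,C)\times\mathcal B(A,B)\to\mathcal B(A,C)$; identity 1-cells $1_A$; inversion functors $(-)^*:\mathcal B(A,B)\to\mathcal B(B,A)$; and natural isomorphisms $\mathbf a:(h*g)*f\Rightarrow h*(g*f)$, $\mathbf l:1_B*f\Rightarrow f$, $\mathbf r:f*1_A\Rightarrow f$, $\mathbf e:f^**f\Rightarrow 1_A$, $\mathbf i:1_B\Rightarrow f*f^*$, such that the pentagon for $\mathbf a$ commutes, $(\mathrm{id}*\mathbf l)\circ\mathbf a=\mathbf r*\mathrm{id}$, and $\mathbf r_f\circ(\mathrm{id}*\mathbf e_f)\circ\mathbf a\circ(\mathbf i_f*\mathrm{id})=\mathbf l_f$. A morphism $(F,\phi):\mathcal A\to\mathcal B$ consists of a function on 0-cells, functors $F_{A,A'}:\mathcal A(A,A')\to\mathcal B(FA,FA')$ and natural isomorphisms $\phi_{g,f}:Fg*Ff\Rightarrow F(g*f)$, $\phi_A:1_{FA}\Rightarrow F1_A$, $\phi_f:(Ff)^*\Rightarrow F(f^* )$ satisfying $F\mathbf a\circ\phi\circ(\phi*\mathrm{id})=\phi\circ(\mathrm{id}*\phi)\circ\mathbf a$, $F\mathbf r\circ\phi\circ(\mathrm{id}*\phi_A)=\mathbf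 r$, $F\mathbf l\circ\phi\circ(\phi_B*\mathrm{id})=\mathbf l$, $F\mathbf e\circ\phi\circ(\phi_f*\mathrm{id})=\phi_A\circ\mathbf e$, $F\mathbf i\circ\phi_B=\phi\circ(\mathrm{id}*\phi_f)\circ\mathbf i$; composition is $(G,\gamma)\circ(F,\phi)=(GF,G\phi\circ\gamma F)$. $\mathbf{Bigpd}$ is the category of small bigroupoids and morphisms. Fibration: (1) for every 0-cell $A'$ of $\mathcal A$ and 1-cell $b:B\to FA'$ there is $a:A\to A'$ with $FA=B$, $Fa=b$; (2) for every 1-cell $a'$ and 2-cell $\beta:b\Rightarrow Fa'$ there is $\alpha:a\Rightarrow a'$ with $Fa=b$, $F\alpha=\beta$. Cofibration: injective on 0-cells and each $F_{A,A'}$ injective on objects. Weak equivalence: every 0-cell $B$ of $\mathcal B$ admits a 1-cell $B\to FA'$ for some 0-cell $A'$ of $\mathcal A$, and each $F_{A,A'}$ is an equivalence of categories. A weak factorization system is a pair $(\mathcal L,\mathcal R)$ of classes of morphisms such that every morphism factors as a map in $\mathcal L$ followed by a map in $\mathcal R$, and $\mathcal L$ (resp. $\mathcal R$) is exactly the class of maps with the left (resp. right) lifting property with respect to $\mathcal R$ (resp. $\mathcal L$). *)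

(* Defs.v *)
From Stdlib Require Import Init.

(* Bigroupoids.  2-cells form a groupoid (all laws are strict equalities
   of 2-cells); composition, identity and inversion are functors; the
   structural 2-cells a, l, r, e, i are natural (they are automatically
   isomorphisms since every 2-cell is invertible). *)
Record Bigroupoid : Type := {
  ob : Type;
  hom : ob -> ob -> Type;
  cell : forall {A B : ob}, hom A B -> hom A B -> Type;
  vcomp : forall {A B} {f g h : hom A B}, cell g h -> cell f g -> cell f h;
  vid : forall {A B} (f : hom A B), cell f f;
  vinv : forall {A B} {f g : hom A B}, cell f g -> cell g f;
  vcomp_assoc : forall A B (f g h k : hom A B) (a : cell f g) (b : cell g h) (c : cell h k),
      vcomp c (vcomp b a) = vcomp (vcomp c b) a;
  vcomp_id_l : forall A B (f g : hom A B) (a : cell f g), vcomp (vid g) a = a;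
  vcomp_id_r : forall A B (f g : hom A B) (a : cell f g), vcomp a (vid f) = a;
  vinv_l : forall A B (f g : hom A B) (a : cell f g), vcomp (vinv a) a = vid f;
  vinv_r : forall A B (f g : hom A B) (a : cell f g), vcomp a (vinv a) = vid g;
  hc : forall {A B C}, hom B C -> hom A B -> hom A C;
  hc2 : forall {A B C} {g g' : hom B C} {f f' : hom A B},
      cell g g' -> cell f f' -> cell (hc g f) (hc g' f');
  hc2_id : forall A B C (g : hom B C) (f : hom A B), hc2 (vid g) (vid f) = vid (hc g f);
  hc2_comp : forall A B C (g g' g'' : hom B C) (f f' f'' : hom A B)
      (b : cell g g') (b' : cell g' g'') (a : cell f f') (a' : cell f' f''),
      hc2 (vcomp b' b) (vcomp a' a) = vcomp (hc2 b' a') (hc2 b a);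
  id1 : forall A, hom A A;
  inv1 : forall {A B}, hom A B -> hom B A;
  inv2 : forall {A B} {f g : hom A B}, cell f g -> cell (inv1 f) (inv1 g);
  inv2_id : forall A B (f : hom A B), inv2 (vid f) = vid (inv1 f);
  inv2_comp : forall A B (f g h : hom A B) (a : cell f g) (b : cell g h),
      inv2 (vcomp b a) = vcomp (inv2 b) (inv2 a);
  assoc : forall {A B C D} (h : hom C D) (g : hom B C) (f : hom A B),
      cell (hc (hc h g) f) (hc h (hc g f));
  assoc_nat : forall A B C D (h h' : hom C D) (g g' : hom B C) (f f' : hom A B)
      (c : cell h h') (b : cell g g') (a : cell f f'),
      vcomp (assoc h' g' f') (hc2 (hc2 c b) a) = vcomp (hc2 c (hc2 b a)) (assoc h g f);
  lu : forall {A B} (f : hom A B), cell (hc (id1 B) f) f;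
  lu_nat : forall A B (f f' : hom A B) (a : cell f f'),
      vcomp (lu f') (hc2 (vid (id1 B)) a) = vcomp a (lu f);
  ru : forall {A B} (f : hom A B), cell (hc f (id1 A)) f;
  ru_nat : forall A B (f f' : hom A B) (a : cell f f'),
      vcomp (ru f') (hc2 a (vid (id1 A))) = vcomp a (ru f);
  ev : forall {A B} (f : hom A B), cell (hc (inv1 f) f) (id1 A);
  ev_nat : forall A B (f f' : hom A B) (a : cell f f'),
      vcomp (ev f') (hc2 (inv2 a) a) = vcomp (vid (id1 A)) (ev f);
  coev : forall {A B} (f : hom A B), cell (id1 B) (hc f (inv1 f));
  coev_nat : forall A B (f f' : hom A B) (a : cell f f'),
      vcomp (coev f') (vid (id1 B)) = vcomp (hc2 a (inv2 a)) (coev f);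
  pentagon : forall A B C D E (k : hom D E) (h : hom C D) (g : hom B C) (f : hom A B),
      vcomp (hc2 (vid k) (assoc h g f))
            (vcomp (assoc k (hc h g) f) (hc2 (assoc k h g) (vid f)))
      = vcomp (assoc k h (hc g f)) (assoc (hc k h) g f);
  triangle : forall A B C (g : hom B C) (f : hom A B),
      vcomp (hc2 (vid g) (lu f)) (assoc g (id1 B) f) = hc2 (ru g) (vid f);
  inverse_coh : forall A B (f : hom A B),
      vcomp (ru f) (vcomp (hc2 (vid f) (ev f))
                   (vcomp (assoc f (inv1 f) f) (hc2 (coev f) (vid f))))
      = lu f
}.

Arguments ob _ : clear implicits.
Arguments hom {_} _ _.
Arguments cell {_ _ _} _ _.
Arguments vcomp {_ _ _ _ _ _} _ _.
Arguments vid {_ _ _} _.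
Arguments vinv {_ _ _ _ _} _.
Arguments hc {_ _ _ _} _ _.
Arguments hc2 {_ _ _ _ _ _ _ _} _ _.
Arguments id1 {_} _.
Arguments inv1 {_ _ _} _.
Arguments inv2 {_ _ _ _ _} _.
Arguments assoc {_ _ _ _ _} _ _ _.
Arguments lu {_ _ _} _.
Arguments ru {_ _ _} _.
Arguments ev {_ _ _} _.
Arguments coev {_ _ _} _.

Record MorData (X Y : Bigroupoid) : Type := {
  F0 : ob X -> ob Y;
  F1 : forall {A B : ob X}, hom A B -> hom (F0 A) (F0 B);
  F2 : forall {A B : ob X} {f g : hom A B}, cell f g -> cell (F1 f) (F1 g);
  phic : forall {A B C : ob X} (g : hom B C) (f : hom A B),
      cell (hc (F1 g) (F1 f)) (F1 (hc g f));
  phiu : forall A : ob X, cell (id1 (F0 A)) (F1 (id1 A));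
  phii : forall {A B : ob X} (f : hom A B), cell (inv1 (F1 f)) (F1 (inv1 f))
}.

Arguments F0 {_ _} _ _.
Arguments F1 {_ _} _ {_ _} _.
Arguments F2 {_ _} _ {_ _ _ _} _.
Arguments phic {_ _} _ {_ _ _} _ _.
Arguments phiu {_ _} _ _.
Arguments phii {_ _} _ {_ _} _.

Definition IsMor {X Y : Bigroupoid} (F : MorData X Y) : Prop :=
  (forall A B (f : hom A B), F2 F (vid f) = vid (F1 F f)) /\
  (forall A B (f g h : hom A B) (a : cell f g) (b : cell g h),
      F2 F (vcomp b a) = vcomp (F2 F b) (F2 F a)) /\
  (forall A B C (g g' : hom B C) (f f' : hom A B) (b : cell g g') (a : cell f f'),
      vcomp (phic F g' f') (hc2 (F2 F b) (F2 F a)) = vcomp (F2 F (hc2 b a)) (phic F g f)) /\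
  (forall A B (f f' : hom A B) (a : cell f f'),
      vcomp (phii F f') (inv2 (F2 F a)) = vcomp (F2 F (inv2 a)) (phii F f)) /\
  (forall A B C D (h : hom C D) (g : hom B C) (f : hom A B),
      vcomp (F2 F (assoc h g f)) (vcomp (phic F (hc h g) f) (hc2 (phic F h g) (vid (F1 F f))))
      = vcomp (phic F h (hc g f)) (vcomp (hc2 (vid (F1 F h)) (phic F g f))
                                        (assoc (F1 F h) (F1 F g) (F1 F f)))) /\
  (forall A B (f : hom A B),
      vcomp (F2 F (ru f)) (vcomp (phic F f (id1 A)) (hc2 (vid (F1 F f)) (phiu F A)))
      = ru (F1 F f)) /\
  (forall A B (f : hom A B),
      vcomp (F2 F (lu f)) (vcomp (phic F (id1 B) f) (hc2 (phiu F B) (vid (F1 F f))))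
      = lu (F1 F f)) /\
  (forall A B (f : hom A B),
      vcomp (F2 F (ev f)) (vcomp (phic F (inv1 f) f) (hc2 (phii F f) (vid (F1 F f))))
      = vcomp (phiu F A) (ev (F1 F f))) /\
  (forall A B (f : hom A B),
      vcomp (F2 F (coev f)) (phiu F B)
      = vcomp (phic F f (inv1 f)) (vcomp (hc2 (vid (F1 F f)) (phii F f)) (coev (F1 F f)))).

Definition compD {X Y Z : Bigroupoid} (G : MorData Y Z) (F : MorData X Y) : MorData X Z :=
  {| F0 := fun A => F0 G (F0 F A);
     F1 := fun A B f => F1 G (F1 F f);
     F2 := fun A B f g a => F2 G (F2 F a);
     phic := fun A B C g f => vcomp (F2 G (phic F g f)) (phic G (F1 F g) (F1 F f));
     phiu := fun A => vcomp (F2 G (phiu F A)) (phiu G (F0 F A));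
     phii := fun A B f => vcomp (F2 G (phii F f)) (phii G (F1 F f)) |}.

Definition fibration {X Y : Bigroupoid} (F : MorData X Y) : Prop :=
  (forall (A' : ob X) (B : ob Y) (b : hom B (F0 F A')),
     exists (A : ob X) (a : hom A A'),
       existT (fun B0 => hom B0 (F0 F A')) (F0 F A) (F1 F a)
       = existT (fun B0 => hom B0 (F0 F A')) B b) /\
  (forall (A A' : ob X) (a' : hom A A') (b : hom (F0 F A) (F0 F A')) (beta : cell b (F1 F a')),
     exists (a : hom A A') (alpha : cell a a'),
       existT (fun b0 => cell b0 (F1 F a')) (F1 F a) (F2 F alpha)
       = existT (fun b0 => cell b0 (F1 F a')) b beta).

Definition cofibration {X Y : Bigroupoid} (F : MorData X Y) : Prop :=
  (forall A A' : ob X, F0 F A = F0 F A' -> A = A') /\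
  (forall (A A' : ob X) (f g : hom A A'), F1 F f = F1 F g -> f = g).

(* Equivalence of categories for the functor F_{A,A'} : X(A,A') -> Y(FA,FA'):
   a functor G back together with natural isomorphisms 1 => GF and FG => 1
   (natural transformations between groupoid-valued functors are automatically
   invertible). *)
Definition hom_equivalence {X Y : Bigroupoid} (F : MorData X Y) (A A' : ob X) : Prop :=
  exists (G1 : hom (F0 F A) (F0 F A') -> hom A A')
         (G2 : forall g g' : hom (F0 F A) (F0 F A'), cell g g' -> cell (G1 g) (G1 g'))
         (eta : forall f : hom A A', cell f (G1 (F1 F f)))
         (eps : forall g : hom (F0 F A) (F0 F A'), cell (F1 F (G1 g)) g),
    (forall g, G2 g g (vid g) = vid (G1 g)) /\
    (forall g g' g'' (b : cell g g') (b' : cell g' g''),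
        G2 g g'' (vcomp b' b) = vcomp (G2 g' g'' b') (G2 g g' b)) /\
    (forall (f f' : hom A A') (a : cell f f'),
        vcomp (eta f') a = vcomp (G2 _ _ (F2 F a)) (eta f)) /\
    (forall (g g' : hom (F0 F A) (F0 F A')) (b : cell g g'),
        vcomp (eps g') (F2 F (G2 g g' b)) = vcomp b (eps g)).

Definition weak_equivalence {X Y : Bigroupoid} (F : MorData X Y) : Prop :=
  (forall B : ob Y, exists (A' : ob X), inhabited (hom B (F0 F A'))) /\
  (forall A A' : ob X, hom_equivalence F A A').

Definition trivial_fibration {X Y : Bigroupoid} (F : MorData X Y) : Prop :=
  fibration F /\ weak_equivalence F.

Definition lifting {A B X Y : Bigroupoid} (i : MorData A B) (p : MorData X Y) : Prop :=
  forall (u : MorData A X) (v : MorData B Y),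
    IsMor u -> IsMor v -> compD p u = compD v i ->
    exists h : MorData B X, IsMor h /\ compD h i = u /\ compD p h = v.

Definition weak_factorization_system
    (L R : forall X Y : Bigroupoid, MorData X Y -> Prop) : Prop :=
  (forall (X Y : Bigroupoid) (f : MorData X Y), IsMor f ->
     exists (Z : Bigroupoid) (i : MorData X Z) (p : MorData Z Y),
       IsMor i /\ IsMor p /\ L X Z i /\ R Z Y p /\ compD p i = f) /\
  (forall (A B : Bigroupoid) (i : MorData A B), IsMor i ->
     (L A B i <-> forall (X Y : Bigroupoid) (p : MorData X Y),
                    IsMor p -> R X Y p -> lifting i p)) /\
  (forall (X Y : Bigroupoid) (p : MorData X Y), IsMor p ->
     (R X Y p <-> forall (A B : Bigroupoid) (i : MorData A B),
                    IsMor i -> L A B i -> lifting i p)).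

(* Main.v *)
Require Import Defs.
From Stdlib Require Import FunctionalExtensionality ClassicalEpsilon Classical JMeq.

Lemma lcancel (Y : Bigroupoid) (A B : ob Y) (f g h : hom A B) (c : cell g h) (a b : cell f g) :
  vcomp c a = vcomp c b -> a = b.
Proof.
  intro H.
  rewrite <- (vcomp_id_l _ _ _ _ _ a), <- (vcomp_id_l _ _ _ _ _ b), <- (vinv_l _ _ _ _ _ c).
  rewrite <- !vcomp_assoc, H. reflexivity.
Qed.

Lemma rcancel (Y : Bigroupoid) (A B : ob Y) (f g h : hom A B) (c : cell f g) (a b : cell g h) :
  vcomp a c = vcomp b c -> a = b.
Proof.
  intro H.
  rewrite <- (vcomp_id_r _ _ _ _ _ a), <- (vcomp_id_r _ _ _ _ _ b), <- (vinv_r _ _ _ _ _ c).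
  rewrite !vcomp_assoc, H. reflexivity.
Qed.

Section Z.
End Z.

Definition pZ {X Y : Bigroupoid} (f : MorData X Y) (z : ob X + ob Y) : ob Y :=
  match z with inl a => F0 f a | inr y => y end.

Definition Xpart {X : Bigroupoid} {T : Type} (z z' : ob X + T) : Type :=
  match z, z' with inl a, inl a' => hom a a' | _, _ => Empty_set end.

Definition homZ {X Y : Bigroupoid} (f : MorData X Y) (z z' : ob X + ob Y) : Type :=
  (Xpart z z' + hom (pZ f z) (pZ f z'))%type.

Definition P1 {X Y : Bigroupoid} (f : MorData X Y) {z z' : ob X + ob Y} (u : homZ f z z')
  : hom (pZ f z) (pZ f z') :=
  match u with
  | inr y => y
  | inl x =>
    (match z, z' return Xpart z z' -> hom (pZ f z) (pZ f z') with
     | inl a, inl a' => fun x => F1 f x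
     | inl a, inr _ => fun e => match e with end
     | inr _, _ => fun e => match e with end
     end) x
  end.

Definition Zb {X Y : Bigroupoid} (f : MorData X Y) : Bigroupoid :=
  {| ob := ob X + ob Y;
     hom := homZ f;
     cell := fun A B u v => cell (P1 f u) (P1 f v);
     vcomp := fun A B u v w b a => vcomp b a;
     vid := fun A B u => vid (P1 f u);
     vinv := fun A B u v a => vinv a;
     vcomp_assoc := fun A B f0 g h k a b c => vcomp_assoc _ _ _ _ _ _ _ a b c;
     vcomp_id_l := fun A B f0 g a => vcomp_id_l _ _ _ _ _ a;
     vcomp_id_r := fun A B f0 g a => vcomp_id_r _ _ _ _ _ a;
     vinv_l := fun A B f0 g a => vinv_l _ _ _ _ _ a;
     vinv_r := fun A B f0 g a => vinv_r _ _ _ _ _ a;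
     hc := fun A B C g f0 => inr (hc (P1 f g) (P1 f f0));
     hc2 := fun A B C g g' f0 f' b a => hc2 b a;
     hc2_id := fun A B C g f0 => hc2_id _ _ _ _ (P1 f g) (P1 f f0);
     hc2_comp := fun A B C g g' g'' f0 f' f'' b b' a a' => hc2_comp _ _ _ _ _ _ _ _ _ _ b b' a a';
     id1 := fun A => inr (id1 (pZ f A));
     inv1 := fun A B u => inr (inv1 (P1 f u));
     inv2 := fun A B u v a => inv2 a;
     inv2_id := fun A B u => inv2_id _ _ _ (P1 f u);
     inv2_comp := fun A B u v w a b => inv2_comp _ _ _ _ _ _ a b;
     assoc := fun A B C D h g f0 => assoc (P1 f h) (P1 f g) (P1 f f0);
     assoc_nat := fun A B C D h h' g g' f0 f' c b a => assoc_nat _ _ _ _ _ _ _ _ _ _ _ c b a;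
     lu := fun A B u => lu (P1 f u);
     lu_nat := fun A B u u' a => lu_nat _ _ _ _ _ a;
     ru := fun A B u => ru (P1 f u);
     ru_nat := fun A B u u' a => ru_nat _ _ _ _ _ a;
     ev := fun A B u => ev (P1 f u);
     ev_nat := fun A B u u' a => ev_nat _ _ _ _ _ a;
     coev := fun A B u => coev (P1 f u);
     coev_nat := fun A B u u' a => coev_nat _ _ _ _ _ a;
     pentagon := fun A B C D E k h g f0 => pentagon _ _ _ _ _ _ (P1 f k) (P1 f h) (P1 f g) (P1 f f0);
     triangle := fun A B C g f0 => triangle _ _ _ _ (P1 f g) (P1 f f0);
     inverse_coh := fun A B u => inverse_coh _ _ _ (P1 f u)
  |}.

Definition Imor {X Y : Bigroupoid} (f : MorData X Y) : MorData X (Zb f) :=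
  {| F0 := fun A => (inl A : ob (Zb f));
     F1 := fun A B g => (inl g : homZ f (inl A) (inl B));
     F2 := fun A B g g' a => (F2 f a : @cell (Zb f) (inl A) (inl B) (inl g) (inl g'));
     phic := fun A B C g h => phic f g h;
     phiu := fun A => phiu f A;
     phii := fun A B g => phii f g |}.

Definition Qmor {X Y : Bigroupoid} (f : MorData X Y) : MorData (Zb f) Y :=
  @Build_MorData (Zb f) Y (pZ f) (fun A B u => P1 f u) (fun A B u v a => a)
    (fun A B C g h => vid _) (fun A => vid _) (fun A B g => vid _).

Lemma Imor_IsMor {X Y : Bigroupoid} (f : MorData X Y) : IsMor f -> IsMor (Imor f).
Proof. intro H. exact H. Qed.

Lemma Qmor_IsMor {X Y : Bigroupoid} (f : MorData X Y) : IsMor (Qmor f).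
Proof.
  unfold IsMor; cbn; repeat split; intros;
  first [ reflexivity
        | exact (eq_trans (vcomp_id_l _ _ _ _ _ _) (eq_sym (vcomp_id_r _ _ _ _ _ _)))
        | rewrite ?(hc2_id Y), ?(vcomp_id_l Y), ?(vcomp_id_r Y); reflexivity ].
Qed.

Lemma Imor_cof {X Y : Bigroupoid} (f : MorData X Y) : cofibration (Imor f).
Proof.
  split; simpl; intros; congruence.
Qed.

Lemma Qmor_triv {X Y : Bigroupoid} (f : MorData X Y) : trivial_fibration (Qmor f).
Proof.
  split; [split|split].
  - intros A' B b. exists (inr B : ob (Zb f)). exists (inr b : homZ f (inr B) A'). reflexivity.
  - intros A A' a' b beta. exists (inr b : homZ f A A'). exists beta. reflexivity.
  - intros B. exists (inr B : ob (Zb f)). constructor. exact (id1 B).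
  - intros A A'.
    exists (fun g => (inr g : homZ f A A')).
    exists (fun g g' b => b).
    exists (fun u => vid (P1 f u)).
    exists (fun g => vid g).
    simpl. repeat split; intros.
    + rewrite vcomp_id_l, vcomp_id_r. reflexivity.
    + rewrite vcomp_id_l, vcomp_id_r. reflexivity.
Qed.

Lemma Qmor_Imor {X Y : Bigroupoid} (f : MorData X Y) : compD (Qmor f) (Imor f) = f.
Proof.
  destruct f as [f0 f1 f2 pc pu pi].
  unfold compD; simpl.
  assert (E1 : (fun A B C (g : hom B C) (h : hom A B) => vcomp (pc A B C g h) (vid (hc (f1 B C g) (f1 A B h)))) = pc).
  { repeat (apply functional_extensionality_dep; intro). apply vcomp_id_r. }
  assert (E2 : (fun A => vcomp (pu A) (vid (id1 (f0 A)))) = pu).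
  { repeat (apply functional_extensionality_dep; intro). apply vcomp_id_r. }
  assert (E3 : (fun A B (g : hom A B) => vcomp (pi A B g) (vid (inv1 (f1 A B g)))) = pi).
  { repeat (apply functional_extensionality_dep; intro). apply vcomp_id_r. }
  rewrite E1, E2, E3. reflexivity.
Qed.

Definition faithful {X Y : Bigroupoid} (F : MorData X Y) : Prop :=
  forall (A A' : ob X) (f f' : hom A A') (a b : cell f f'), F2 F a = F2 F b -> a = b.

Lemma vc_r (Y : Bigroupoid) (A B : ob Y) (f g g' h : hom A B) (a : cell g h) (b : cell f g)
  (c : cell g' h) (d : cell f g') :
  vcomp a b = vcomp c d -> forall (e : hom A B) (x : cell e f), vcomp a (vcomp b x) = vcomp c (vcomp d x).
Proof. intros H e x. rewrite !vcomp_assoc, H. reflexivity. Qed.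

Lemma hc2_comp_r (Y : Bigroupoid) (A B C : ob Y) (g g' g'' : hom B C) (f f' f'' : hom A B)
      (b : cell g g') (b' : cell g' g'') (a : cell f f') (a' : cell f' f'')
      (e : hom A C) (x : cell e (hc g f)) :
  vcomp (hc2 b' a') (vcomp (hc2 b a) x) = vcomp (hc2 (vcomp b' b) (vcomp a' a)) x.
Proof. rewrite vcomp_assoc, hc2_comp. reflexivity. Qed.

Ltac nrm := repeat rewrite <- vcomp_assoc.
Ltac nrmH H := repeat rewrite <- vcomp_assoc in H.

Lemma reflect_IsMor {W X Y : Bigroupoid} (F : MorData X Y) (G : MorData W X) :
  IsMor F -> faithful F -> IsMor (compD F G) -> IsMor G.
Proof.
  intros HF Ff HK.
  destruct HF as (Fid & Fcomp & Fnat & Finat & Fas & Fru & Flu & Fev & Fco).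
  destruct HK as (Kid & Kcomp & Knat & Kinat & Kas & Kru & Klu & Kev & Kco).
  simpl in Kid, Kcomp, Knat, Kinat, Kas, Kru, Klu, Kev, Kco.
  assert (FnatR : forall A B C (g g' : hom B C) (f f' : hom A B) (b : cell g g') (a : cell f f')
     e (x : cell e _),
     vcomp (F2 F (hc2 b a)) (vcomp (phic F g f) x) = vcomp (phic F g' f') (vcomp (hc2 (F2 F b) (F2 F a)) x)).
  { intros. symmetry. apply vc_r. apply Fnat. }
  assert (FinatR : forall A B (f f' : hom A B) (a : cell f f') e (x : cell e _),
      vcomp (F2 F (inv2 a)) (vcomp (phii F f) x) = vcomp (phii F f') (vcomp (inv2 (F2 F a)) x)).
  { intros. symmetry. apply vc_r. apply Finat. }
  repeat split.
  - intros. apply Ff. rewrite Fid. apply Kid.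
  - intros. apply Ff. rewrite Fcomp. apply Kcomp.
  - intros A B C g g' f f' b a. apply Ff. rewrite !Fcomp.
    apply (rcancel _ _ _ _ _ _ (phic F (F1 G g) (F1 G f))).
    nrm. first [rewrite FnatR | rewrite <- Fnat]. specialize (Knat _ _ _ _ _ _ _ b a). nrmH Knat. exact Knat.
  - intros A B f f' a. apply Ff. rewrite !Fcomp.
    apply (rcancel _ _ _ _ _ _ (phii F (F1 G f))).
    nrm. first [rewrite FinatR | rewrite <- Finat]. specialize (Kinat _ _ _ _ a). nrmH Kinat. exact Kinat.
  - intros A B C D h g f. apply Ff. rewrite !Fcomp.
    apply (rcancel _ _ _ _ _ _ (vcomp (phic F (hc (F1 G h) (F1 G g)) (F1 G f))
                                     (hc2 (phic F (F1 G h) (F1 G g)) (vid (F1 F (F1 G f)))))).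
    nrm. first [rewrite FnatR | rewrite <- Fnat]; rewrite Fid; first [rewrite hc2_comp_r | rewrite <- hc2_comp]; rewrite vcomp_id_l.
    specialize (Kas _ _ _ _ h g f). nrmH Kas. rewrite Kas.
    specialize (Fas _ _ _ _ (F1 G h) (F1 G g) (F1 G f)). nrmH Fas. rewrite Fas.
    first [rewrite FnatR | rewrite <- Fnat]; rewrite Fid; first [rewrite hc2_comp_r | rewrite <- hc2_comp]; rewrite vcomp_id_l. reflexivity.
  - intros A B f. apply Ff. rewrite !Fcomp.
    apply (rcancel _ _ _ _ _ _ (vcomp (phic F (F1 G f) (id1 (F0 G A)))
                                     (hc2 (vid (F1 F (F1 G f))) (phiu F (F0 G A))))).
    nrm. first [rewrite FnatR | rewrite <- Fnat]; rewrite Fid; first [rewrite hc2_comp_r | rewrite <- hc2_comp]; rewrite vcomp_id_l.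
    specialize (Kru _ _ f). nrmH Kru. rewrite Kru.
    specialize (Fru _ _ (F1 G f)). nrmH Fru. rewrite Fru. reflexivity.
  - intros A B f. apply Ff. rewrite !Fcomp.
    apply (rcancel _ _ _ _ _ _ (vcomp (phic F (id1 (F0 G B)) (F1 G f))
                                     (hc2 (phiu F (F0 G B)) (vid (F1 F (F1 G f)))))).
    nrm. first [rewrite FnatR | rewrite <- Fnat]; rewrite Fid; first [rewrite hc2_comp_r | rewrite <- hc2_comp]; rewrite vcomp_id_l.
    specialize (Klu _ _ f). nrmH Klu. rewrite Klu.
    specialize (Flu _ _ (F1 G f)). nrmH Flu. rewrite Flu. reflexivity.
  - intros A B f. apply Ff. rewrite !Fcomp.
    apply (rcancel _ _ _ _ _ _ (vcomp (phic F (inv1 (F1 G f)) (F1 G f))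
                                     (hc2 (phii F (F1 G f)) (vid (F1 F (F1 G f)))))).
    nrm. first [rewrite FnatR | rewrite <- Fnat]; rewrite Fid; first [rewrite hc2_comp_r | rewrite <- hc2_comp]; rewrite vcomp_id_l.
    specialize (Kev _ _ f). nrmH Kev. rewrite Kev.
    specialize (Fev _ _ (F1 G f)). nrmH Fev. rewrite Fev. reflexivity.
  - intros A B f. apply Ff. rewrite !Fcomp.
    apply (rcancel _ _ _ _ _ _ (phiu F (F0 G B))).
    nrm. specialize (Kco _ _ f). nrmH Kco. rewrite Kco.
    specialize (Fco _ _ (F1 G f)). nrmH Fco. rewrite Fco.
    first [rewrite FnatR | rewrite <- Fnat]; rewrite Fid; first [rewrite hc2_comp_r | rewrite <- hc2_comp]; rewrite vcomp_id_l. reflexivity.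
Qed.

Definition idD (X : Bigroupoid) : MorData X X :=
  @Build_MorData X X (fun A => A) (fun A B f => f) (fun A B f g a => a)
    (fun A B C g h => vid _) (fun A => vid _) (fun A B g => vid _).

Lemma idD_IsMor (X : Bigroupoid) : IsMor (idD X).
Proof.
  unfold IsMor; cbn; repeat split; intros;
  first [ reflexivity
        | exact (eq_trans (vcomp_id_l _ _ _ _ _ _) (eq_sym (vcomp_id_r _ _ _ _ _ _)))
        | rewrite ?(hc2_id X), ?(vcomp_id_l X), ?(vcomp_id_r X); reflexivity ].
Qed.

Lemma compD_id_l {X Y : Bigroupoid} (f : MorData X Y) : compD (idD Y) f = f.
Proof.
  destruct f as [f0 f1 f2 pc pu pi].
  unfold compD; simpl.
  assert (E1 : (fun A B C (g : hom B C) (h : hom A B) => vcomp (pc A B C g h) (vid (hc (f1 B C g) (f1 A B h)))) = pc).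
  { repeat (apply functional_extensionality_dep; intro). apply vcomp_id_r. }
  assert (E2 : (fun A => vcomp (pu A) (vid (id1 (f0 A)))) = pu).
  { repeat (apply functional_extensionality_dep; intro). apply vcomp_id_r. }
  assert (E3 : (fun A B (g : hom A B) => vcomp (pi A B g) (vid (inv1 (f1 A B g)))) = pi).
  { repeat (apply functional_extensionality_dep; intro). apply vcomp_id_r. }
  rewrite E1, E2, E3. reflexivity.
Qed.

Lemma compD_id_r {X Y : Bigroupoid} (f : MorData X Y) : IsMor f -> compD f (idD X) = f.
Proof.
  intro Hf. destruct Hf as (Fid & _).
  destruct f as [f0 f1 f2 pc pu pi]. simpl in Fid.
  unfold compD; simpl.
  assert (E1 : (fun A B C (g : hom B C) (h : hom A B) => vcomp (f2 _ _ _ _ (vid (hc g h))) (pc A B C g h)) = pc).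
  { repeat (apply functional_extensionality_dep; intro). rewrite Fid. apply vcomp_id_l. }
  assert (E2 : (fun A => vcomp (f2 _ _ _ _ (vid (id1 A))) (pu A)) = pu).
  { repeat (apply functional_extensionality_dep; intro). rewrite Fid. apply vcomp_id_l. }
  assert (E3 : (fun A B (g : hom A B) => vcomp (f2 _ _ _ _ (vid (inv1 g))) (pi A B g)) = pi).
  { repeat (apply functional_extensionality_dep; intro). rewrite Fid. apply vcomp_id_l. }
  rewrite E1, E2, E3. reflexivity.
Qed.

Lemma we_faithful {X Y : Bigroupoid} (p : MorData X Y) : weak_equivalence p -> faithful p.
Proof.
  intros [_ Hw] A A' f f' a b Hab.
  destruct (Hw A A') as (G1 & G2 & eta & eps & H1 & H2 & H3 & H4).
  apply (lcancel _ _ _ _ _ _ (eta f')). rewrite !H3, Hab. reflexivity.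
Qed.

Lemma we_full {X Y : Bigroupoid} (p : MorData X Y) : weak_equivalence p ->
  forall A A' (f f' : hom A A') (beta : cell (F1 p f) (F1 p f')), exists alpha, F2 p alpha = beta.
Proof.
  intros [_ Hw] A A' f f' beta.
  destruct (Hw A A') as (G1 & G2 & eta & eps & H1 & H2 & H3 & H4).
  exists (vcomp (vinv (eta f')) (vcomp (G2 _ _ beta) (eta f))).
  set (al := vcomp (vinv (eta f')) (vcomp (G2 _ _ beta) (eta f))).
  assert (HG : G2 _ _ (F2 p al) = G2 _ _ beta).
  { apply (rcancel _ _ _ _ _ _ (eta f)). rewrite <- H3. unfold al.
    rewrite !vcomp_assoc, vinv_r, vcomp_id_l. reflexivity. }
  apply (rcancel _ _ _ _ _ _ (eps (F1 p f))). rewrite <- !H4, HG. reflexivity.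
Qed.

Lemma tf_surj1 {X Y : Bigroupoid} (p : MorData X Y) : trivial_fibration p ->
  forall (x x' : ob X) (g : hom (F0 p x) (F0 p x')), exists a : hom x x', F1 p a = g.
Proof.
  intros [[_ Hf2] [_ Hw]] x x' g.
  destruct (Hw x x') as (G1 & G2 & eta & eps & H1 & H2 & H3 & H4).
  destruct (Hf2 x x' (G1 g) g (vinv (eps g))) as (a & al & E).
  exists a. exact (f_equal (@projT1 _ _) E).
Qed.

Lemma tf_surj0 {X Y : Bigroupoid} (p : MorData X Y) : trivial_fibration p ->
  forall (B : ob Y), exists A : ob X, F0 p A = B.
Proof.
  intros [[Hf1 _] [Hw _]] B.
  destruct (Hw B) as [A' [b]].
  destruct (Hf1 A' B b) as (A & a & E).
  exists A. exact (f_equal (@projT1 _ _) E).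
Qed.

Lemma eqF0 {X Y} (M N : MorData X Y) : M = N -> forall a, F0 M a = F0 N a.
Proof. intros; subst; reflexivity. Qed.
Lemma eqF1 {X Y} (M N : MorData X Y) : M = N -> forall a b (f : hom a b), JMeq (F1 M f) (F1 N f).
Proof. intros; subst; reflexivity. Qed.
Lemma eqF2 {X Y} (M N : MorData X Y) : M = N -> forall a b (f g : hom a b) (al : cell f g),
  JMeq (F2 M al) (F2 N al).
Proof. intros; subst; reflexivity. Qed.
Lemma eqphic {X Y} (M N : MorData X Y) : M = N -> forall a b c (g : hom b c) (f : hom a b),
  JMeq (phic M g f) (phic N g f).
Proof. intros; subst; reflexivity. Qed.
Lemma eqphiu {X Y} (M N : MorData X Y) : M = N -> forall a, JMeq (phiu M a) (phiu N a).
Proof. intros; subst; reflexivity. Qed.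
Lemma eqphii {X Y} (M N : MorData X Y) : M = N -> forall a b (f : hom a b),
  JMeq (phii M f) (phii N f).
Proof. intros; subst; reflexivity. Qed.

Lemma tr_hom {Y : Bigroupoid} (s t s' t' : ob Y) : s = s' -> t = t' ->
  forall x : hom s' t', exists y : hom s t, JMeq y x.
Proof. intros; subst; eauto. Qed.

Lemma tr_cell {Y : Bigroupoid} (s t s' t' : ob Y) (x y : hom s t) (x' y' : hom s' t') :
  s = s' -> t = t' -> JMeq x x' -> JMeq y y' ->
  forall g : cell x' y', exists b : cell x y, JMeq b g.
Proof. intros; subst; eauto. Qed.

Lemma jm_F1 {X Y} (F : MorData X Y) (s t s' t' : ob X) (x : hom s t) (x' : hom s' t') :
  s = s' -> t = t' -> JMeq x x' -> JMeq (F1 F x) (F1 F x').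
Proof. intros; subst; eauto. Qed.

Lemma jm_F2 {X Y} (F : MorData X Y) (s t s' t' : ob X) (x y : hom s t) (x' y' : hom s' t')
  (g : cell x y) (g' : cell x' y') :
  s = s' -> t = t' -> JMeq x x' -> JMeq y y' -> JMeq g g' -> JMeq (F2 F g) (F2 F g').
Proof. intros; subst; eauto. Qed.

Lemma jm_hc {Y : Bigroupoid} (a b c a' b' c' : ob Y) (x : hom b c) (y : hom a b)
  (x' : hom b' c') (y' : hom a' b') :
  a = a' -> b = b' -> c = c' -> JMeq x x' -> JMeq y y' -> JMeq (hc x y) (hc x' y').
Proof. intros; subst; eauto. Qed.

Lemma jm_id1 {Y : Bigroupoid} (a a' : ob Y) : a = a' -> JMeq (id1 a) (id1 a').
Proof. intros; subst; reflexivity. Qed.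

Lemma jm_inv1 {Y : Bigroupoid} (a b a' b' : ob Y) (x : hom a b) (x' : hom a' b') :
  a = a' -> b = b' -> JMeq x x' -> JMeq (inv1 x) (inv1 x').
Proof. intros; subst; eauto. Qed.

Lemma vinv_cancel {Y : Bigroupoid} (A B : ob Y) (f g h : hom A B) (b : cell g h) (c : cell g f) :
  vcomp (vcomp b (vinv c)) c = b.
Proof. rewrite <- vcomp_assoc, vinv_l, vcomp_id_r. reflexivity. Qed.

Lemma jm_vid {Y : Bigroupoid} (s t s' t' : ob Y) (x : hom s t) (x' : hom s' t') :
  s = s' -> t = t' -> JMeq x x' -> JMeq (vid x) (vid x').
Proof. intros; subst; eauto. Qed.

Lemma jm_vcomp {Y : Bigroupoid} (s t s' t' : ob Y) (f g h : hom s t) (f' g' h' : hom s' t')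
  (b : cell g h) (a : cell f g) (b' : cell g' h') (a' : cell f' g') :
  s = s' -> t = t' -> JMeq f f' -> JMeq g g' -> JMeq h h' -> JMeq b b' -> JMeq a a' ->
  JMeq (vcomp b a) (vcomp b' a').
Proof. intros; subst; eauto. Qed.

Lemma existT_jm {T : Type} (P : T -> Type) (s s' : T) (x : P s) (y : P s') :
  s = s' -> JMeq x y -> existT P s x = existT P s' y.
Proof. intros; subst; eauto. Qed.

Lemma eq_JMeq {T : Type} (x y : T) : x = y -> JMeq x y.
Proof. intros; subst; reflexivity. Qed.

Lemma choice1 {I : Type} {T : I -> Type} (Q : forall a, T a -> Prop) :
  (forall a, exists y, Q a y) -> exists f : forall a, T a, forall a, Q a (f a).
Proof.
  intro H. exists (fun a => proj1_sig (constructive_indefinite_description _ (H a))).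
  intro a. exact (proj2_sig (constructive_indefinite_description _ (H a))).
Qed.

Lemma choice3 {I1 I2 : Type} {I3 : I1 -> I2 -> Type} {T : forall a b, I3 a b -> Type}
  (Q : forall a b c, T a b c -> Prop) :
  (forall a b c, exists y, Q a b c y) -> exists f : forall a b c, T a b c, forall a b c, Q a b c (f a b c).
Proof.
  intro H. exists (fun a b c => proj1_sig (constructive_indefinite_description _ (H a b c))).
  intros a b c. exact (proj2_sig (constructive_indefinite_description _ (H a b c))).
Qed.

Lemma choice5 {I1 I2 : Type} {I3 : I1 -> I2 -> Type} {I4 : forall a b, I3 a b -> Type}
  {I5 : forall a b c, I4 a b c -> Type} {T : forall a b c d, I5 a b c d -> Type}
  (Q : forall a b c d e, T a b c d e -> Prop) :
  (forall a b c d e, exists y, Q a b c d e y) ->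
  exists f : forall a b c d e, T a b c d e, forall a b c d e, Q a b c d e (f a b c d e).
Proof.
  intro H. exists (fun a b c d e => proj1_sig (constructive_indefinite_description _ (H a b c d e))).
  intros a b c d e. exact (proj2_sig (constructive_indefinite_description _ (H a b c d e))).
Qed.

Lemma lift_main {A B X Y : Bigroupoid} (i : MorData A B) (p : MorData X Y) :
  cofibration i -> IsMor p -> trivial_fibration p -> lifting i p.
Proof.
  intros [Ci0 Ci1] Hp Tp u v Hu Hv E.
  pose proof (we_faithful p (proj2 Tp)) as Pf.
  pose proof (we_full p (proj2 Tp)) as Pfull.
  pose proof (tf_surj1 p Tp) as S1.
  pose proof (tf_surj0 p Tp) as S0.
  assert (H0 : forall b : ob B, exists x : ob X, F0 p x = F0 v b /\ forall a, F0 i a = b -> x = F0 u a).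
  { intro b. destruct (classic (exists a, F0 i a = b)) as [[a ea]|n].
    - exists (F0 u a). split.
      + rewrite <- ea. exact (eqF0 _ _ E a).
      + intros a' ea'. rewrite <- ea' in ea. apply Ci0 in ea. subst. reflexivity.
    - destruct (S0 (F0 v b)) as [x ex]. exists x. split; [exact ex|]. intros a ea; exfalso; eauto. }
  destruct (choice1 _ H0) as [h0 Hh0]. clear H0.
  assert (H1 : forall b b' (g : hom b b'), exists y : hom (h0 b) (h0 b'),
     JMeq (F1 p y) (F1 v g) /\
     forall a a' (f : hom a a'), F0 i a = b -> F0 i a' = b' -> JMeq (F1 i f) g -> JMeq y (F1 u f)).
  { intros b b' g.
    destruct (classic (exists a a' (f : hom a a'), F0 i a = b /\ F0 i a' = b' /\ JMeq (F1 i f) g))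
      as [(a & a' & f & ea & ea' & J)|n].
    - destruct (tr_hom (h0 b) (h0 b') (F0 u a) (F0 u a') (proj2 (Hh0 b) a ea) (proj2 (Hh0 b') a' ea') (F1 u f)) as [y Jy].
      exists y. split.
      + apply (JMeq_trans (y := F1 p (F1 u f))).
        { apply jm_F1; [apply (proj2 (Hh0 b) a ea) | apply (proj2 (Hh0 b') a' ea') | exact Jy]. }
        apply (JMeq_trans (y := F1 v (F1 i f))).
        { exact (eqF1 _ _ E _ _ f). }
        apply jm_F1; [exact ea| exact ea' | exact J].
      + intros a2 a2' f2 e2 e2' J2.
        assert (a2 = a) by (apply Ci0; congruence). assert (a2' = a') by (apply Ci0; congruence). subst a2 a2'.
        assert (Hf : F1 i f2 = F1 i f).
        { apply JMeq_eq. apply (JMeq_trans (y := g)); [exact J2 | apply JMeq_sym; exact J]. }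
        apply Ci1 in Hf. subst f2. exact Jy.
    - destruct (tr_hom (F0 p (h0 b)) (F0 p (h0 b')) (F0 v b) (F0 v b') (proj1 (Hh0 b)) (proj1 (Hh0 b')) (F1 v g)) as [g' Jg].
      destruct (S1 _ _ g') as [y ey]. exists y. split.
      + rewrite ey. exact Jg.
      + intros a a' f ea ea' J. exfalso. apply n. eauto 6. }
  destruct (choice3 _ H1) as [h1 Hh1]. clear H1.
  assert (H2 : forall b b' (g g' : hom b b') (ga : cell g g'), exists al : cell (h1 b b' g) (h1 b b' g'),
       JMeq (F2 p al) (F2 v ga)).
  { intros. destruct (tr_cell (F0 p (h0 b)) (F0 p (h0 b')) (F0 v b) (F0 v b') (F1 p (h1 b b' g)) (F1 p (h1 b b' g')) (F1 v g) (F1 v g') (proj1 (Hh0 b)) (proj1 (Hh0 b')) (proj1 (Hh1 _ _ g)) (proj1 (Hh1 _ _ g')) (F2 v ga)) as [be Jb].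
    destruct (Pfull _ _ _ _ be) as [al eal]. exists al. rewrite eal. exact Jb. }
  destruct (choice5 _ H2) as [h2 Hh2]. clear H2.
  assert (H3 : forall b1 b2 b3 (g : hom b2 b3) (f : hom b1 b2),
     exists al : cell (hc (h1 _ _ g) (h1 _ _ f)) (h1 _ _ (hc g f)),
       JMeq (vcomp (F2 p al) (phic p (h1 _ _ g) (h1 _ _ f))) (phic v g f)).
  { intros.
    destruct (tr_cell (F0 p (h0 b1)) (F0 p (h0 b3)) (F0 v b1) (F0 v b3)
       (hc (F1 p (h1 _ _ g)) (F1 p (h1 _ _ f))) (F1 p (h1 _ _ (hc g f)))
       (hc (F1 v g) (F1 v f)) (F1 v (hc g f))
       (proj1 (Hh0 b1)) (proj1 (Hh0 b3))
       (jm_hc _ _ _ _ _ _ _ _ _ _ (proj1 (Hh0 b1)) (proj1 (Hh0 b2)) (proj1 (Hh0 b3)) (proj1 (Hh1 _ _ g)) (proj1 (Hh1 _ _ f)))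
       (proj1 (Hh1 _ _ (hc g f)))
       (phic v g f)) as [be Jb].
    destruct (Pfull _ _ _ _ (vcomp be (vinv (phic p (h1 _ _ g) (h1 _ _ f))))) as [al eal].
    exists al. rewrite eal, vinv_cancel. exact Jb. }
  destruct (choice5 _ H3) as [hcc Hhcc]. clear H3.
  assert (H4 : forall b, exists al : cell (id1 (h0 b)) (h1 _ _ (id1 b)),
      JMeq (vcomp (F2 p al) (phiu p (h0 b))) (phiu v b)).
  { intros. destruct (tr_cell (F0 p (h0 b)) (F0 p (h0 b)) (F0 v b) (F0 v b) (id1 (F0 p (h0 b))) (F1 p (h1 _ _ (id1 b))) (id1 (F0 v b)) (F1 v (id1 b)) (proj1 (Hh0 b)) (proj1 (Hh0 b)) (jm_id1 _ _ (proj1 (Hh0 b))) (proj1 (Hh1 _ _ (id1 b))) (phiu v b)) as [be Jb].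
    destruct (Pfull _ _ _ _ (vcomp be (vinv (phiu p (h0 b))))) as [al eal]. exists al. rewrite eal, vinv_cancel. exact Jb. }
  destruct (choice1 _ H4) as [hu Hhu]. clear H4.
  assert (H5 : forall b b' (g : hom b b'), exists al : cell (inv1 (h1 _ _ g)) (h1 _ _ (inv1 g)),
      JMeq (vcomp (F2 p al) (phii p (h1 _ _ g))) (phii v g)).
  { intros. destruct (tr_cell (F0 p (h0 b')) (F0 p (h0 b)) (F0 v b') (F0 v b) (inv1 (F1 p (h1 _ _ g))) (F1 p (h1 _ _ (inv1 g))) (inv1 (F1 v g)) (F1 v (inv1 g)) (proj1 (Hh0 b')) (proj1 (Hh0 b)) (jm_inv1 _ _ _ _ _ _ (proj1 (Hh0 b)) (proj1 (Hh0 b')) (proj1 (Hh1 _ _ g))) (proj1 (Hh1 _ _ (inv1 g))) (phii v g)) as [be Jb].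
    destruct (Pfull _ _ _ _ (vcomp be (vinv (phii p (h1 _ _ g))))) as [al eal]. exists al. rewrite eal, vinv_cancel. exact Jb. }
  destruct (choice3 _ H5) as [hi Hhi]. clear H5.
  pose (h := @Build_MorData B X h0 h1 h2 hcc hu hi).
  assert (Ev : compD p h = v).
  { clear Hv E. destruct v as [v0 v1 v2 vc vu vi]; simpl in *.
    assert (e0 : (fun b => F0 p (h0 b)) = v0).
    { apply functional_extensionality; intro b; exact (proj1 (Hh0 b)). }
    subst v0.
    assert (e1 : (fun b b' (g : hom b b') => F1 p (h1 b b' g)) = v1).
    { repeat (apply functional_extensionality_dep; intro). apply JMeq_eq. exact (proj1 (Hh1 _ _ _)). }
    subst v1.
    assert (e2 : (fun b b' (g g' : hom b b') (ga : cell g g') => F2 p (h2 b b' g g' ga)) = v2).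
    { repeat (apply functional_extensionality_dep; intro). apply JMeq_eq. exact (Hh2 _ _ _ _ _). }
    subst v2.
    assert (e3 : (fun b1 b2 b3 (g : hom b2 b3) (f : hom b1 b2) =>
                    vcomp (F2 p (hcc _ _ _ g f)) (phic p (h1 _ _ g) (h1 _ _ f))) = vc).
    { repeat (apply functional_extensionality_dep; intro). apply JMeq_eq. exact (Hhcc _ _ _ _ _). }
    subst vc.
    assert (e4 : (fun b => vcomp (F2 p (hu b)) (phiu p (h0 b))) = vu).
    { repeat (apply functional_extensionality_dep; intro). apply JMeq_eq. exact (Hhu _). }
    subst vu.
    assert (e5 : (fun b b' (g : hom b b') => vcomp (F2 p (hi _ _ g)) (phii p (h1 _ _ g))) = vi).
    { repeat (apply functional_extensionality_dep; intro). apply JMeq_eq. exact (Hhi _ _ _). }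
    subst vi.
    reflexivity. }
  subst v.
  assert (Eu : compD h i = u).
  { clear Hu. destruct u as [u0 u1 u2 uc uu ui]; simpl in *.
    assert (e0 : (fun a => h0 (F0 i a)) = u0).
    { apply functional_extensionality; intro a. exact (proj2 (Hh0 (F0 i a)) a eq_refl). }
    subst u0.
    assert (e1 : (fun a a' (f : hom a a') => h1 _ _ (F1 i f)) = u1).
    { repeat (apply functional_extensionality_dep; intro). apply JMeq_eq.
      exact (proj2 (Hh1 _ _ _) _ _ _ eq_refl eq_refl JMeq_refl). }
    subst u1.
    assert (e2 : (fun a a' (f g : hom a a') (d : cell f g) => h2 _ _ _ _ (F2 i d)) = u2).
    { repeat (apply functional_extensionality_dep; intro). apply Pf.
      symmetry. apply JMeq_eq. exact (eqF2 _ _ E _ _ _ _ _). }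
    subst u2.
    destruct Hp as (_ & Pcomp & _).
    assert (e3 : (fun a b c (g : hom b c) (f : hom a b) => vcomp (h2 _ _ _ _ (phic i g f)) (hcc _ _ _ (F1 i g) (F1 i f))) = uc).
    { repeat (apply functional_extensionality_dep; intro). apply Pf.
      pose proof (JMeq_eq (eqphic _ _ E _ _ _ x2 x3)) as Q. simpl in Q.
      rewrite Pcomp.
      apply (rcancel _ _ _ _ _ _ (phic p (h1 _ _ (F1 i x2)) (h1 _ _ (F1 i x3)))).
      rewrite Q. nrm. reflexivity. }
    subst uc.
    assert (e4 : (fun a => vcomp (h2 _ _ _ _ (phiu i a)) (hu (F0 i a))) = uu).
    { repeat (apply functional_extensionality_dep; intro). apply Pf.
      pose proof (JMeq_eq (eqphiu _ _ E x)) as Q. simpl in Q.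
      rewrite Pcomp.
      apply (rcancel _ _ _ _ _ _ (phiu p (h0 (F0 i x)))).
      rewrite Q. nrm. reflexivity. }
    subst uu.
    assert (e5 : (fun a a' (f : hom a a') => vcomp (h2 _ _ _ _ (phii i f)) (hi _ _ (F1 i f))) = ui).
    { repeat (apply functional_extensionality_dep; intro). apply Pf.
      pose proof (JMeq_eq (eqphii _ _ E _ _ x1)) as Q. simpl in Q.
      rewrite Pcomp.
      apply (rcancel _ _ _ _ _ _ (phii p (h1 _ _ (F1 i x1)))).
      rewrite Q. nrm. reflexivity. }
    subst ui.
    reflexivity. }
  exists h. split; [|split].
  - exact (reflect_IsMor p h Hp Pf Hv).
  - exact Eu.
  - reflexivity.
Qed.

Lemma retract_tf {X Y : Bigroupoid} (p : MorData X Y) (r : MorData (Zb p) X) :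
  IsMor r -> compD r (Imor p) = idD X -> compD p r = Qmor p -> trivial_fibration p.
Proof.
  intros Hr Eri Epr.
  assert (Er0 : forall a, F0 r (inl a : ob (Zb p)) = a) by exact (eqF0 _ _ Eri).
  assert (Er1 : forall a a' (f : hom a a'), JMeq (F1 r (inl f : @hom (Zb p) (inl a) (inl a'))) f)
    by exact (eqF1 _ _ Eri).
  assert (Er2 : forall a a' (f g : hom a a') (al : cell f g),
             JMeq (F2 r (F2 (Imor p) al)) al) by exact (eqF2 _ _ Eri).
  assert (Ep0 : forall z, F0 p (F0 r z) = pZ p z) by exact (eqF0 _ _ Epr).
  assert (Ep1 : forall z z' (u : @hom (Zb p) z z'), JMeq (F1 p (F1 r u)) (P1 p u))
    by exact (eqF1 _ _ Epr).
  assert (Ep2 : forall z z' (u v : @hom (Zb p) z z') (ga : @cell (Zb p) z z' u v),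
     JMeq (F2 p (F2 r ga)) ga) by exact (eqF2 _ _ Epr).
  destruct Hr as (Rid & Rcomp & _).
  split; [split|split].
  - intros A' B b.
    pose (a0 := (inr b : @hom (Zb p) (inr B) (inl A'))).
    destruct (tr_hom (F0 r (inr B : ob (Zb p))) A' (F0 r (inr B : ob (Zb p))) (F0 r (inl A' : ob (Zb p)))
                eq_refl (eq_sym (Er0 A')) (F1 r a0)) as [y Jy].
    exists (F0 r (inr B : ob (Zb p))), y.
    apply existT_jm.
    + exact (Ep0 (inr B)).
    + apply (JMeq_trans (y := F1 p (F1 r a0))).
      * apply jm_F1; [reflexivity | exact (eq_sym (Er0 A')) | exact Jy].
      * exact (Ep1 _ _ a0).
  - intros A A' a' b beta.
    pose (a0 := (inr b : @hom (Zb p) (inl A) (inl A'))).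
    pose (bz := (beta : @cell (Zb p) (inl A) (inl A') a0 (inl a'))).
    destruct (tr_hom A A' (F0 r (inl A : ob (Zb p))) (F0 r (inl A' : ob (Zb p)))
                (eq_sym (Er0 A)) (eq_sym (Er0 A')) (F1 r a0)) as [y Jy].
    destruct (tr_cell A A' (F0 r (inl A : ob (Zb p))) (F0 r (inl A' : ob (Zb p)))
                y a' (F1 r a0) (F1 r (inl a' : @hom (Zb p) (inl A) (inl A')))
                (eq_sym (Er0 A)) (eq_sym (Er0 A')) Jy (JMeq_sym (Er1 _ _ a')) (F2 r bz)) as [al Jal].
    assert (Jpy : JMeq (F1 p y) b).
    { apply (JMeq_trans (y := F1 p (F1 r a0))).
      - apply jm_F1; [exact (eq_sym (Er0 A)) | exact (eq_sym (Er0 A')) | exact Jy].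
      - exact (Ep1 _ _ a0). }
    exists y, al. apply existT_jm.
    + exact (JMeq_eq Jpy).
    + apply (JMeq_trans (y := F2 p (F2 r bz))).
      * eapply jm_F2; [exact (eq_sym (Er0 A)) | exact (eq_sym (Er0 A')) | exact Jy
                      | exact (JMeq_sym (Er1 _ _ a')) | exact Jal].
      * exact (Ep2 _ _ _ _ bz).
  - intro B. exists (F0 r (inr B : ob (Zb p))). constructor.
    pose proof (Ep0 (inr B)) as e. simpl in e. rewrite e. exact (id1 B).
  - intros A A'.
    assert (HG1 : forall g : hom (F0 p A) (F0 p A'), exists y : hom A A',
               JMeq y (F1 r (inr g : @hom (Zb p) (inl A) (inl A')))).
    { intro g. apply tr_hom; symmetry; apply Er0. }
    destruct (choice1 _ HG1) as [G1 HG1']. clear HG1.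
    assert (HG2 : forall (g g' : hom (F0 p A) (F0 p A')) (b : cell g g'), exists c : cell (G1 g) (G1 g'),
               JMeq c (F2 r (b : @cell (Zb p) (inl A) (inl A') (inr g) (inr g')))).
    { intros g g' b. eapply tr_cell; [symmetry; apply Er0 | symmetry; apply Er0 | apply HG1' | apply HG1']. }
    destruct (choice3 _ HG2) as [G2 HG2']. clear HG2.
    assert (Het : forall f : hom A A', exists c : cell f (G1 (F1 p f)),
               JMeq c (F2 r (vid (F1 p f) : @cell (Zb p) (inl A) (inl A') (inl f) (inr (F1 p f))))).
    { intro f. eapply tr_cell; [symmetry; apply Er0 | symmetry; apply Er0 | apply JMeq_sym, Er1 | apply HG1']. }
    destruct (choice1 _ Het) as [eta Heta]. clear Het.
    assert (Jpg : forall g, JMeq (F1 p (G1 g)) g).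
    { intro g. apply (JMeq_trans (y := F1 p (F1 r (inr g : @hom (Zb p) (inl A) (inl A'))))).
      - apply jm_F1; [symmetry; apply Er0 | symmetry; apply Er0 | apply HG1'].
      - exact (Ep1 _ _ (inr g : @hom (Zb p) (inl A) (inl A'))). }
    assert (Hep : forall g : hom (F0 p A) (F0 p A'), exists c : cell (F1 p (G1 g)) g, JMeq c (vid g)).
    { intro g. eapply tr_cell; [reflexivity | reflexivity | apply Jpg | reflexivity]. }
    destruct (choice1 _ Hep) as [eps Heps]. clear Hep.
    exists G1, G2, eta, eps.
    repeat split.
    + intro g. apply JMeq_eq.
      apply (JMeq_trans (y := F2 r (vid g : @cell (Zb p) (inl A) (inl A') (inr g) (inr g)))); [apply HG2'|].
      apply (JMeq_trans (y := vid (F1 r (inr g : @hom (Zb p) (inl A) (inl A'))))).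
      * apply eq_JMeq. exact (Rid _ _ (inr g : @hom (Zb p) (inl A) (inl A'))).
      * apply jm_vid; [apply Er0 | apply Er0 | apply JMeq_sym, HG1'].
    + intros g g' g'' b b'. apply JMeq_eq.
      apply (JMeq_trans (y := F2 r (vcomp b' b : @cell (Zb p) (inl A) (inl A') (inr g) (inr g'')))); [apply HG2'|].
      apply (JMeq_trans (y := vcomp (F2 r (b' : @cell (Zb p) (inl A) (inl A') (inr g') (inr g'')))
                                   (F2 r (b : @cell (Zb p) (inl A) (inl A') (inr g) (inr g'))))).
      * apply eq_JMeq. exact (Rcomp _ _ (inr g : @hom (Zb p) (inl A) (inl A')) (inr g') (inr g'') b b').
      * apply jm_vcomp; try apply Er0; try (apply JMeq_sym; apply HG1'); apply JMeq_sym, HG2'.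
    + intros f f' a. apply JMeq_eq.
      pose (ia := (F2 (Imor p) a : @cell (Zb p) (inl A) (inl A') (inl f) (inl f'))).
      pose (pa := (F2 p a : @cell (Zb p) (inl A) (inl A') (inr (F1 p f)) (inr (F1 p f')))).
      pose (et := fun f0 => (vid (F1 p f0) : @cell (Zb p) (inl A) (inl A') (inl f0) (inr (F1 p f0)))).
      assert (EZ : @vcomp (Zb p) _ _ _ _ _ (et f') ia = @vcomp (Zb p) _ _ _ _ _ pa (et f)).
      { unfold et, ia, pa; cbn. rewrite (vcomp_id_l Y), (vcomp_id_r Y). reflexivity. }
      apply (JMeq_trans (y := vcomp (F2 r (et f')) (F2 r ia))).
      { apply jm_vcomp; try (symmetry; apply Er0); try (apply JMeq_sym; apply Er1);
          try apply HG1'; try apply Heta. apply JMeq_sym. apply Er2. }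
      apply (JMeq_trans (y := vcomp (F2 r pa) (F2 r (et f)))).
      { apply eq_JMeq. rewrite <- !Rcomp. exact (f_equal (fun c => F2 r c) EZ). }
      apply jm_vcomp; try apply Er0; try apply Er1; try (apply JMeq_sym; apply HG1');
        apply JMeq_sym; first [apply Heta | apply HG2'].
    + intros g g' b. apply JMeq_eq.
      apply (JMeq_trans (y := b)).
      * apply (JMeq_trans (y := vcomp (vid g') b)).
        { apply jm_vcomp; try reflexivity; try apply Jpg; try apply Heps.
          apply (JMeq_trans (y := F2 p (F2 r (b : @cell (Zb p) (inl A) (inl A') (inr g) (inr g'))))).
          - eapply jm_F2; try (symmetry; apply Er0); try apply HG1'; apply HG2'.
          - apply Ep2. }
        apply eq_JMeq. apply vcomp_id_l.
      * apply (JMeq_trans (y := vcomp b (vid g))).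
        { apply eq_JMeq. symmetry. apply vcomp_id_r. }
        apply jm_vcomp; try reflexivity; try (apply JMeq_sym; apply Jpg); apply JMeq_sym, Heps.
Qed.

Theorem proposition4p1 :
  weak_factorization_system
    (fun X Y f => cofibration f)
    (fun X Y p => trivial_fibration p).
Proof.
  split; [|split].
  - intros X Y f Hf. exists (Zb f), (Imor f), (Qmor f).
    split; [exact (Imor_IsMor f Hf)|].
    split; [exact (Qmor_IsMor f)|].
    split; [exact (Imor_cof f)|].
    split; [exact (Qmor_triv f)|].
    exact (Qmor_Imor f).
  - intros A B i Hi. split.
    + intros Ci X Y p Hp Tp. exact (lift_main i p Ci Hp Tp).
    + intros Hl.
      destruct (Hl (Zb i) B (Qmor i) (Qmor_IsMor i) (Qmor_triv i) (Imor i) (idD B)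
                   (Imor_IsMor i Hi) (idD_IsMor B)) as (h & Hh & Ehi & _).
      { rewrite Qmor_Imor, compD_id_l. reflexivity. }
      split.
      * intros a a' e.
        pose proof (eqF0 _ _ Ehi a) as e1. pose proof (eqF0 _ _ Ehi a') as e2.
        simpl in e1, e2. rewrite e in e1. rewrite e1 in e2. injection e2. auto.
      * intros a a' f g e.
        pose proof (eqF1 _ _ Ehi _ _ f) as j1. pose proof (eqF1 _ _ Ehi _ _ g) as j2.
        simpl in j1, j2. rewrite e in j1.
        assert (E : (inl f : homZ i (inl a) (inl a')) = inl g).
        { apply JMeq_eq. apply (JMeq_trans (y := F1 h (F1 i g))); [apply JMeq_sym; exact j1 | exact j2]. }
        injection E. auto.
  - intros X Y p Hp. split.
    + intros Tp A B i Hi Ci. exact (lift_main i p Ci Hp Tp).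
    + intros Hl.
      destruct (Hl X (Zb p) (Imor p) (Imor_IsMor p Hp) (Imor_cof p) (idD X) (Qmor p)
                   (idD_IsMor X) (Qmor_IsMor p)) as (r & Hr & Eri & Epr).
      { rewrite compD_id_r by exact Hp. rewrite Qmor_Imor. reflexivity. }
      exact (retract_tf p r Hr Eri Epr).
Qed.
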